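(* Let $G$ be a group with generating set $S$ not containing the identity, and let $d_C$ be the cardinal metric on $G$ with respect to $S$. Then $\{L_a\circ\tau : a\in G,\ \tau\in\mathrm{Aut}(G,S)\}\subseteq \mathrm{Iso}(G,d_C)$, where $L_a(g)=ag$, $\mathrm{Aut}(G,S)$ is the group of automorphisms $\tau$ of $G$ with $\tau(S)=S$, and $\mathrm{Iso}(G,d_C)$ is the set of isometries of $(G,d_C)$ onto itself.
   Context: The cardinal norm is $\|x\| = \min\{|A| : A\subseteq S,\ x\in\langle A\rangle\}$, where $\langle A\rangle$ is the subgroup generated by $A$, and $d_C(g,h)=\|g^{-1}h\|$. *)

(* Defs.v *)
From Stdlib Require Import List ClassicalEpsilon.
Import ListNotations.

Record Group := {
  carrier :> Type;
  gmul : carrier -> carrier -> carrier;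
  gone : carrier;
  ginv : carrier -> carrier;
  gmulA : forall x y z, gmul x (gmul y z) = gmul (gmul x y) z;
  gmul1l : forall x, gmul gone x = x;
  gmul1r : forall x, gmul x gone = x;
  gmulVl : forall x, gmul (ginv x) x = gone;
  gmulVr : forall x, gmul x (ginv x) = gone
}.

Arguments gmul {g}.
Arguments gone {g}.
Arguments ginv {g}.

Section Defs.
Variable G : Group.

Definition is_subgroup (H : G -> Prop) : Prop :=
  H gone /\ (forall x y, H x -> H y -> H (gmul x y)) /\
  (forall x, H x -> H (ginv x)).

Definition gen (A : G -> Prop) (x : G) : Prop :=
  forall H, is_subgroup H -> (forall a, A a -> H a) -> H x.

Definition generates (S : G -> Prop) : Prop := forall x : G, gen S x.

Definition card_witness (S : G -> Prop) (x : G) (n : nat) : Prop :=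
  exists A : list G, NoDup A /\ length A = n /\ (forall a, In a A -> S a) /\
    gen (fun a => In a A) x.

Definition is_card_norm (S : G -> Prop) (x : G) (n : nat) : Prop :=
  card_witness S x n /\ forall m, card_witness S x m -> n <= m.

Definition card_norm (S : G -> Prop) (x : G) : nat :=
  epsilon (inhabits 0) (fun n => is_card_norm S x n).

Definition card_dist (S : G -> Prop) (g h : G) : nat :=
  card_norm S (gmul (ginv g) h).

Definition is_isometry (S : G -> Prop) (f : G -> G) : Prop :=
  (forall y, exists x, f x = y) /\
  (forall g h, card_dist S (f g) (f h) = card_dist S g h).

Definition in_Aut_S (S : G -> Prop) (tau : G -> G) : Prop :=
  (forall x y, tau (gmul x y) = gmul (tau x) (tau y)) /\
  (forall x y, tau x = tau y -> x = y) /\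
  (forall y, exists x, tau x = y) /\
  (forall s, S s -> S (tau s)) /\
  (forall s, S s -> exists t, S t /\ tau t = s).

End Defs.

(* Main.v *)
Require Import Defs.
From Stdlib Require Import List FinFun ClassicalEpsilon FunctionalExtensionality PropExtensionality.
Import ListNotations.

Section H.
Variable G : Group.

Lemma hom_one (tau : G -> G) : (forall x y, tau (gmul x y) = gmul (tau x) (tau y)) ->
  tau gone = gone.
Proof.
  intro Hm. assert (E : tau gone = gmul (tau gone) (tau gone)).
  { rewrite <- Hm, gmul1l. reflexivity. }
  transitivity (gmul (gmul (ginv (tau gone)) (tau gone)) (tau gone)).
  - rewrite gmulVl, gmul1l. reflexivity.
  - rewrite <- gmulA, <- E, gmulVl. reflexivity.
Qed.

Lemma hom_inv (tau : G -> G) : (forall x y, tau (gmul x y) = gmul (tau x) (tau y)) ->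
  forall x, tau (ginv x) = ginv (tau x).
Proof.
  intros Hm x.
  rewrite <- (gmul1r G (tau (ginv x))).
  rewrite <- (gmulVr G (tau x)), gmulA, <- Hm, gmulVl, hom_one, gmul1l; auto.
Qed.

Lemma witness_map (S : G -> Prop) tau x n : in_Aut_S G S tau ->
  card_witness G S x n -> card_witness G S (tau x) n.
Proof.
  intros [Hm [Hi [Hs [HS HS']]]] [A [Hnd [Hl [HA Hg]]]].
  exists (map tau A). split; [|split; [|split]].
  - apply FinFun.Injective_map_NoDup; [intros u v; apply Hi | auto].
  - rewrite length_map; auto.
  - intros b Hb. apply in_map_iff in Hb. destruct Hb as [a' [<- Ha]]. auto.
  - intros H [H1 [H2 H3]] HH.
    apply (Hg (fun y => H (tau y))).
    + split; [|split].
      * rewrite hom_one; auto.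
      * intros u v Hu Hv. rewrite Hm; auto.
      * intros u Hu. rewrite hom_inv; auto.
    + intros a' Ha. apply HH, in_map_iff. eauto.
Qed.

Lemma inverse_aut (S : G -> Prop) tau : in_Aut_S G S tau ->
  exists sigma, in_Aut_S G S sigma /\ (forall x, sigma (tau x) = x) /\
   (forall y, tau (sigma y) = y).
Proof.
  intros Ht. pose proof Ht as [Hm [Hi [Hs [HS HS']]]].
  assert (Hc : forall y, {x | tau x = y}).
  { intro y. apply constructive_indefinite_description. auto. }
  exists (fun y => proj1_sig (Hc y)).
  assert (K1 : forall y, tau (proj1_sig (Hc y)) = y) by (intro y; apply proj2_sig).
  assert (K2 : forall x, proj1_sig (Hc (tau x)) = x) by (intro x; apply Hi, K1).
  split; [|split; auto].
  split; [|split; [|split; [|split]]].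
  - intros x y. apply Hi. rewrite Hm, !K1. reflexivity.
  - intros x y E. rewrite <- (K1 x), <- (K1 y), E. reflexivity.
  - intros y. exists (tau y). apply K2.
  - intros s Hs0. destruct (HS' s Hs0) as [t [Ht' <-]]. rewrite K2. auto.
  - intros s Hs0. exists (tau s). auto.
Qed.

Lemma norm_aut (S : G -> Prop) tau x : in_Aut_S G S tau ->
  card_norm G S (tau x) = card_norm G S x.
Proof.
  intros Ht. destruct (inverse_aut S tau Ht) as [sg [Hsg [K1 K2]]].
  assert (E : forall n, card_witness G S (tau x) n <-> card_witness G S x n).
  { intro n; split; intro W.
    - rewrite <- (K1 x). apply witness_map; auto.
    - apply witness_map; auto. }
  unfold card_norm.
  assert (P : (fun n => is_card_norm G S (tau x) n) = (fun n => is_card_norm G S x n)).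
  { apply functional_extensionality; intro n. apply propositional_extensionality.
    unfold is_card_norm. split; intros [W M]; split.
    - apply E; auto.
    - intros m Wm. apply M, E; auto.
    - apply E; auto.
    - intros m Wm. apply M, E; auto. }
  rewrite P. reflexivity.
Qed.
End H.

Theorem mainTheorem12 (G : Group) (S : G -> Prop)
  (hgen : generates G S) (h1 : ~ S gone) :
  forall (a : G) (tau : G -> G), in_Aut_S G S tau ->
    is_isometry G S (fun g => gmul a (tau g)).
Proof.
  intros a tau Ht. pose proof Ht as [Hm [Hi [Hs _]]].
  split.
  - intro y. destruct (Hs (gmul (ginv a) y)) as [x Hx]. exists x.
    rewrite Hx, gmulA, gmulVr, gmul1l. reflexivity.
  - intros g h. unfold card_dist.
    replace (gmul (ginv (gmul a (tau g))) (gmul a (tau h))) with (tau (gmul (ginv g) h)).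
    + apply norm_aut; auto.
    + rewrite Hm, hom_inv; auto.
      assert (I : ginv (gmul a (tau g)) = gmul (ginv (tau g)) (ginv a)).
      { rewrite <- (gmul1r G (gmul (ginv (tau g)) (ginv a))).
        rewrite <- (gmulVr G (gmul a (tau g))).
        rewrite !gmulA, <- (gmulA G _ (ginv a) a), gmulVl, gmul1r, gmulVl, gmul1l.
        reflexivity. }
      rewrite I, <- !gmulA, (gmulA G (ginv a) a), gmulVl, gmul1l. reflexivity.
Qed.
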